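(* Let $\Gamma=(N,A,u)$ be a finite normal form game with $N=\{1,\dots,n\}$ and $n\ge3$, in which every player has the same strategy set $X$, so $A=X^n$. The following are equivalent: (i) $\Gamma$ is fully symmetric (i.e. $u_i=u_{\pi(i)}\circ\pi$ for all $i\in N$ and $\pi\in S_N$) and $u_i=u_j$ for all $i,j\in N$; (ii) for each $i\in N$ and $\pi\in S_N$, $u_i=u_{\pi(i)}\circ\pi^{-1}$.
   Context: For $\sigma\in S_N$ and $s\in A$ write $\sigma(s)=(s_{\sigma^{-1}(i)})_{i\in N}$, and for $f:A\to\mathbb{R}$, $f\circ\sigma$ denotes the map $s\mapsto f(\sigma(s))$. $u_i:A\to\mathbb{R}$ is the utility function of player $i$. *)

(* Defs.v *)
From HB Require Import structures.
From mathcomp Require Import all_boot all_order all_algebra all_fingroup.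
Set Implicit Arguments. Unset Strict Implicit. Unset Printing Implicit Defensive.
Import GRing.Theory Num.Theory.
Local Open Scope ring_scope.

Definition profile (n : nat) (X : finType) := {ffun 'I_n -> X}.

Definition pact (n : nat) (X : finType) (sigma : {perm 'I_n}) (s : profile n X)
  : profile n X := [ffun i => s (sigma^-1 i)%g].

Definition compp (n : nat) (X : finType) (R : Type) (f : profile n X -> R)
  (sigma : {perm 'I_n}) : profile n X -> R := fun s => f (pact sigma s).

Definition fully_symmetric (n : nat) (X : finType) (R : Type)
  (u : 'I_n -> profile n X -> R) : Prop :=
  forall (i : 'I_n) (pi : {perm 'I_n}), u i = compp (u (pi i)) pi.

(* Main.v *)
Require Import Defs.
From mathcomp Require Import all_boot all_order all_algebra all_fingroup.
From Stdlib Require Import FunctionalExtensionality.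

Section Aux.
Variables (n : nat) (X : finType).

Lemma pactM (s t : {perm 'I_n}) (y : profile n X) :
  pact s (pact t y) = pact (t * s)%g y.
Proof. by apply/ffunP => x; rewrite !ffunE invMg permM. Qed.

Lemma pact1 (y : profile n X) : pact 1%g y = y.
Proof. by apply/ffunP => x; rewrite !ffunE invg1 perm1. Qed.

Lemma tperm_id3 (i b c : 'I_n) : i != b -> i != c -> b != c ->
  tperm i b = (tperm b c * tperm i b * tperm b c * tperm i b * tperm b c)%g.
Proof.
move=> ib ic bc.
have bi : b != i by rewrite eq_sym. have ci : c != i by rewrite eq_sym.
have cb : c != b by rewrite eq_sym.
apply/permP => x; rewrite !permM !permE /=.
have [E|xi] := eqVneq x i. subst x.
  by rewrite !(eqxx, negbTE ib, negbTE ic, negbTE bc, negbTE bi, negbTE ci, negbTE cb).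
have [E|xb] := eqVneq x b. subst x.
  by rewrite !(eqxx, negbTE ib, negbTE ic, negbTE bc, negbTE bi, negbTE ci, negbTE cb).
have [E|xc] := eqVneq x c. subst x.
  by rewrite !(eqxx, negbTE ib, negbTE ic, negbTE bc, negbTE bi, negbTE ci, negbTE cb).
by rewrite !(eqxx, negbTE ib, negbTE ic, negbTE bc, negbTE bi, negbTE ci, negbTE cb, negbTE xi, negbTE xb, negbTE xc).
Qed.

End Aux.

Theorem theorem3p18 (R : realFieldType) (n : nat) (X : finType)
  (u : 'I_n -> profile n X -> R) :
  (3 <= n)%N ->
  ((fully_symmetric u /\ (forall i j : 'I_n, u i = u j)) <->
   (forall (i : 'I_n) (pi : {perm 'I_n}), u i = compp (u (pi i)) (pi^-1)%g)).
Proof.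
move=> n3; split.
  case=> FS EQ i pi; apply: functional_extensionality => s; rewrite /compp.
  rewrite (EQ (pi i) i).
  have := FS i pi^-1%g => /(congr1 (fun f => f s)); rewrite /compp => ->.
  by rewrite (EQ (pi^-1 i)%g i).
move=> H.
have G : forall i (g : {perm 'I_n}) y, u (g i) y = u i (pact g y).
  move=> i g y; have := H i g => /(congr1 (fun f => f (pact g y))).
  by rewrite /compp pactM mulgV pact1.
have Comm : forall i (s t : {perm 'I_n}) y,
    u i (pact (s * t)%g y) = u i (pact (t * s)%g y).
  move=> i s t y; rewrite -G permM G G pactM //.
have B : forall i (p : {perm 'I_n}) y, p i = i -> u i (pact p y) = u i y.
  by move=> i p y hp; rewrite -G hp.
have TI : forall i (b : 'I_n) y, i != b -> u i (pact (tperm i b) y) = u i y.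
  move=> i b y ib.
  have [c cib] : exists c : 'I_n, c \notin [set i; b].
    have /subsetPn [c _ cib] : ~~ ([set: 'I_n] \subset [set i; b]).
      apply/negP => /subset_leq_card; rewrite cardsT card_ord cards2.
      by case: (i != b) => /= h; move: (leq_trans n3 h).
    by exists c.
  move: cib; rewrite !inE negb_or => /andP[ci cb].
  rewrite eq_sym in ci; rewrite eq_sym in cb.
  set a := tperm i b; set b' := tperm b c.
  have E : a = (b' * a * b' * a * b')%g by apply: tperm_id3.
  rewrite E -pactM B; last by rewrite tpermD // eq_sym.
  rewrite Comm !mulgA -pactM B; last by rewrite tpermD // eq_sym.
  rewrite Comm !mulgA -pactM B; last by rewrite tpermD // eq_sym.
  by rewrite /a tperm2 pact1.
have T : forall i (x z : 'I_n) y, u i (pact (tperm x z) y) = u i y.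
  move=> i x z y.
  have [->|xz] := eqVneq x z; first by rewrite tperm1 pact1.
  have [Ex|xi] := eqVneq x i; last first.
    have [Ez|zi] := eqVneq z i; last by apply: B; rewrite tpermD // eq_sym.
    by subst z; rewrite tpermC; apply: TI; rewrite eq_sym.
  by subst x; apply: TI.
have Inv : forall i (p : {perm 'I_n}) y, u i (pact p y) = u i y.
  move=> i p; case: (prod_tpermP p) => ts -> _; elim: ts => [|t ts IH] y.
    by rewrite big_nil pact1.
  by rewrite big_cons -pactM IH T.
have EQ : forall i j : 'I_n, u i = u j.
  move=> i j; apply: functional_extensionality => y.
  by rewrite -(tpermL i j) G Inv.
split=> // i pi; apply: functional_extensionality => s.
by rewrite /compp (EQ (pi i) i) Inv.
Qed.
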